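(* Let $P$ be the Borel probability measure on $\mathbb{R}$ with density $f(x)=(3/2)^n$ if $x\in J_n:=[1-\frac{1}{3^{n-1}},1-\frac{2}{3^n}]$ for some $n\in\mathbb{N}$, and $f(x)=0$ otherwise. Let $\alpha=\{a_1,a_2,a_3\}$ be an optimal set of three-means for $P$ with $a_1<a_2<a_3$. Then $a_1=\frac16$, $a_2=\frac{13}{18}$, $a_3=\frac{17}{18}$, and the corresponding quantization error is $V_3=\frac{29}{5508}$.
   Context: $\mathbb{N}=\{1,2,\dots\}$. For $n\in\mathbb{N}$, the $n$th quantization error of $P$ is $V_n=\inf\{\int\min_{a\in\alpha}(x-a)^2\,dP(x):\alpha\subset\mathbb{R},\ \mathrm{card}(\alpha)\le n\}$, and an optimal set of $n$-means is a set $\alpha$ with $\mathrm{card}(\alpha)\le n$ attaining this infimum. *)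

(* Defs.v *)
From HB Require Import structures.
From mathcomp Require Import all_boot all_order all_algebra finmap.
From mathcomp Require Import all_classical all_reals all_analysis.
Set Implicit Arguments. Unset Strict Implicit. Unset Printing Implicit Defensive.
Import Order.TTheory GRing.Theory Num.Theory.
Local Open Scope classical_set_scope.
Local Open Scope ring_scope.
Local Open Scope fset_scope.

Section Quant.
Variable R : realType.

Definition J (n : nat) : set R :=
  `[1 - (3 ^+ n.-1)^-1, 1 - 2 / 3 ^+ n]%classic.

(* density f(x) = (3/2)^n on J_n (n >= 1), 0 elsewhere; the J_n are
   pairwise disjoint, so this series has at most one nonzero term *)
Definition dens (x : R) : \bar R :=
  (\sum_(1 <= n <oo) (((3 / 2) ^+ n * \1_(J n) x)%:E))%E.

(* min_{a in beta} (x - a)^2  (+oo if beta is empty) *)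
Definition mindist (beta : {fset R}) (x : R) : \bar R :=
  \big[Order.min/+oo%E]_(a <- beta) (((x - a) ^+ 2)%:E).

Definition cost (beta : {fset R}) : \bar R :=
  (\int[@lebesgue_measure R]_x (dens x * mindist beta x))%E.

Definition V (n : nat) : \bar R :=
  ereal_inf [set cost beta | beta in [set beta : {fset R} | (#|` beta| <= n)%N]].

Definition optimal_set (n : nat) (alpha : {fset R}) : Prop :=
  (#|` alpha| <= n)%N /\ cost alpha = V n.

End Quant.

(* Main.v *)
Require Import Defs.
From HB Require Import structures.
From mathcomp Require Import all_boot all_order all_algebra finmap.
From mathcomp Require Import all_classical all_reals all_analysis.
From mathcomp Require Import ring lra zify.
Import Order.TTheory GRing.Theory Num.Theory.
Local Open Scope ring_scope.
Local Open Scope fset_scope.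

Module Aux.
Set Implicit Arguments. Unset Strict Implicit. Unset Printing Implicit Defensive.
Import Order.TTheory GRing.Theory Num.Theory.
Import numFieldNormedType.Exports.
Import measurable_realfun.
Local Open Scope classical_set_scope.
Local Open Scope ring_scope.

Section PA.
Variable R : realType.
Local Notation mu := (@lebesgue_measure R).

Lemma dF (c x : R) : is_derive x 1 (fun y : R => (y - c)^+3 / 3) ((x-c)^+2).
Proof.
apply: is_derive_eq.
rewrite !scaler0 !subr0 /GRing.scale /=.
by field.
Qed.
Lemma cF (c : R) : continuous (fun y : R => (y - c)^+3 / 3).
Proof.
move=> x.
apply: differentiable_continuous; apply/derivable1_diffP.
exact: (@ex_derive _ _ _ _ _ _ _ (dF c x)).
Qed.
Lemma dq (c x : R) : is_derive x 1 (fun y : R => (y - c)^+2) (2 * (x-c)).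
Proof.
apply: is_derive_eq.
rewrite !subr0 /GRing.scale /=.
by ring.
Qed.
Lemma cq (c : R) : continuous (fun y : R => (y - c)^+2).
Proof.
move=> x.
apply: differentiable_continuous; apply/derivable1_diffP.
exact: (@ex_derive _ _ _ _ _ _ _ (dq c x)).
Qed.
Lemma int_quad (l r c : R) : l < r ->
  (\int[mu]_(x in `[l, r]) ((x - c)^+2)%:E = (((r-c)^+3 - (l-c)^+3)/3)%:E)%E.
Proof.
move=> lr.
rewrite (@continuous_FTC2 _ _ (fun y : R => (y - c)^+3 / 3)) //.
- by rewrite -EFinB mulrBl.
- by apply: continuous_subspaceT; exact: cq.
- split.
  + by move=> x _; exact: (@ex_derive _ _ _ _ _ _ _ (dF c x)).
  + by apply: cvg_at_right_filter; exact: cF c l.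
  + by apply: cvg_at_left_filter; exact: cF c r.
- by move=> x _; rewrite derive1E; exact: (@derive_val _ _ _ _ _ _ _ (dF c x)).
Qed.

Definition w (n : nat) : R := (3 / 2) ^+ n.

Lemma J0 x : \1_(J (R:=R) 0) x = 0 :> R.
Proof.
rewrite indicE; case: (boolP (x \in J (R:=R) 0)) => // /set_mem.
rewrite /J /= in_itv /= expr0 invr1 subrr => /andP[h1 h2].
by have := le_trans h1 h2; lra.
Qed.

Lemma mJ n : measurable (J n : set R).
Proof. exact: measurable_itv. Qed.

Lemma dens_int (g : R -> R) : continuous g -> (forall x, 0 <= g x) ->
  (\int[mu]_x (dens x * (g x)%:E) =
   \sum_(n <oo) ((w n)%:E * \int[mu]_(x in J n) (g x)%:E))%E.
Proof.
move=> cg g0.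
have mg : measurable_fun setT g by exact: continuous_measurable_fun.
have E1 x : (dens x * (g x)%:E =
   \sum_(n <oo) ((w n * \1_(J n) x * g x)%:E))%E.
  rewrite muleC /dens -nneseriesZl; last first.
    by move=> i _; rewrite lee_fin mulr_ge0 // ?exprn_ge0 // ?divr_ge0 //.
  rewrite (@nneseries_split _ _ 0 1); last first.
    by move=> k _; rewrite lee_fin mulr_ge0 // ?mulr_ge0 ?exprn_ge0 ?divr_ge0.
  rewrite add0n big_nat1 J0 mulr0 mul0r add0e.
  by apply: eq_eseriesr => n _; rewrite -EFinM /w; congr (_%:E); ring.
under eq_integral do rewrite E1.
rewrite integral_nneseries //; last first.
- by move=> n x _; rewrite lee_fin mulr_ge0 // mulr_ge0 // exprn_ge0 // divr_ge0.
- move=> n; apply/measurable_EFinP.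
  apply: measurable_funM => //; apply: measurable_funM => //.
  exact: measurable_indic (mJ n).
apply: eq_eseriesr => n _.
rewrite integral_mkcond [X in (_ * X)%E]integral_mkcond.
rewrite -ge0_integralZl_EFin //; last 3 first.
- by move=> x _; rewrite patchE; case: ifP => // _; rewrite lee_fin.
- apply/(measurable_restrictT _ _).1 => //; first exact: mJ.
  by apply: measurableT_comp => //; exact: measurable_funS mg.
- by rewrite /w exprn_ge0 // divr_ge0.
apply: eq_integral => x _; rewrite !patchE indicE mem_setT.
case: (x \in J n) => /=; first by rewrite mulr1 EFinM.
by rewrite mulr0 mul0r mule0.
Qed.
End PA.
Arguments w {R} n.


Section PB.
Variable R : realType.
Local Notation mu := (@lebesgue_measure R).

Definition Q (l r c : R) : R := ((r-c)^+3 - (l-c)^+3)/3.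

Lemma meas_cont (g : R -> R) (D : set R) : continuous g -> measurable D ->
  measurable_fun D (fun x => (g x)%:E).
Proof.
move=> cg mD; apply: measurableT_comp => //.
exact: measurable_funS (continuous_measurable_fun cg).
Qed.

Lemma int_lb (g : R -> R) (l r c : R) : continuous g -> l < r ->
  (forall x, l <= x -> x <= r -> (x - c)^+2 <= g x) ->
  ((Q l r c)%:E <= \int[mu]_(x in `[l, r]) (g x)%:E)%E.
Proof.
move=> cg lr H; rewrite /Q -int_quad //.
apply: ge0_le_integral => //.
- by move=> x _; rewrite lee_fin sqr_ge0.
- by apply: meas_cont => //; exact: cq.
- exact: meas_cont.
- move=> x; rewrite /= in_itv /= => /andP[h1 h2]; rewrite lee_fin; exact: H.
Qed.

Lemma int_ub (g : R -> R) (l r c : R) : continuous g -> l < r ->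
  (forall x, 0 <= g x) ->
  (forall x, l <= x -> x <= r -> g x <= (x - c)^+2) ->
  (\int[mu]_(x in `[l, r]) (g x)%:E <= (Q l r c)%:E)%E.
Proof.
move=> cg lr g0 H; rewrite /Q -int_quad //.
apply: ge0_le_integral => //.
- by move=> x _; rewrite lee_fin.
- exact: meas_cont.
- by apply: meas_cont => //; exact: cq.
- move=> x; rewrite /= in_itv /= => /andP[h1 h2]; rewrite lee_fin; exact: H.
Qed.

Lemma int_split (g : R -> R) (l u r : R) : continuous g -> l <= u -> u <= r ->
  (\int[mu]_(x in `[l, r]) (g x)%:E =
   \int[mu]_(x in `[l, u]) (g x)%:E + \int[mu]_(x in `[u, r]) (g x)%:E)%E.
Proof.
move=> cg lu ur.
rewrite (@itv_bndbnd_setU _ _ (BLeft l) (BRight u) (BRight r)); last 2 first.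
- by rewrite bnd_simp.
- by rewrite bnd_simp.
rewrite integral_setU //=.
- rewrite integral_itv_obnd_cbnd //.
  exact: (meas_cont cg (measurable_itv _)).
- exact: (meas_cont cg (measurableU _ _ (measurable_itv _) (measurable_itv _))).
- apply/disj_setPS => x [] /=; rewrite !in_itv /= => /andP[_ h1] /andP[h2 _].
  by move: (lt_le_trans h2 h1); rewrite ltxx.
Qed.

End PB.


Section PC.
Variable R : realType.
Local Notation mu := (@lebesgue_measure R).

Definition lo (n : nat) : R := 1 - (3 ^+ n.-1)^-1.
Definition hi (n : nat) : R := 1 - 2 / 3 ^+ n.
Lemma JE n : J n = `[lo n, hi n]%classic.
Proof. by []. Qed.

Definition Fc (c : R) (N : nat) : R :=
  2 * (1 - c)^+2 / 2^+N - 6 * (1 - c) / 6^+N + (114/17) / 18^+N.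

Lemma u_tel n c : (0 < n)%N ->
  w n * Q (lo n) (hi n) c = Fc c n - Fc c n.+1.
Proof.
case: n => // k _.
rewrite /w /Q /lo /hi /Fc /=.
have e6 : (6 : R)^+k = 2^+k * 3^+k by rewrite -exprMn; congr (_ ^+ _); ring.
have e18 : (18 : R)^+k = 2^+k * 3^+k * 3^+k by rewrite -!exprMn; congr (_ ^+ _); ring.
have e32 : ((3 : R) / 2)^+k = 3^+k / 2^+k by rewrite expr_div_n.
rewrite !exprS e6 e18 e32.
have t0 : (3 : R)^+k != 0 by rewrite expf_neq0 // pnatr_eq0.
have s0 : (2 : R)^+k != 0 by rewrite expf_neq0 // pnatr_eq0.
field.
by rewrite t0 s0.
Qed.

Lemma Fc_cvg c : Fc c N @[N --> \oo] --> 0.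
Proof.
have -> : Fc c = (fun N => geometric (2*(1-c)^+2) (2^-1) N - geometric (6*(1-c)) (6^-1) N
   + geometric (114/17) (18^-1) N).
  by apply/funext => N; rewrite /geometric /Fc /= !exprVn.
have n2 : `|(2 : R)^-1| < 1 by rewrite ger0_norm; lra.
have n6 : `|(6 : R)^-1| < 1 by rewrite ger0_norm; lra.
have n18 : `|(18 : R)^-1| < 1 by rewrite ger0_norm; lra.
have h := cvgD (cvgB (cvg_geometric (2*(1-c)^+2) n2) (cvg_geometric (6*(1-c)) n6))
   (cvg_geometric (114/17) n18).
move: h. rewrite subrr addr0. apply.
Qed.

Lemma series_val c :
  (\sum_(3 <= n <oo) ((w n * Q (lo n) (hi n) c)%:E) = (Fc c 3)%:E)%E.
Proof.
have ps N : (3 <= N)%N ->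
  (\sum_(3 <= n < N) ((w n * Q (lo n) (hi n) c)%:E) = (Fc c 3 - Fc c N)%:E)%E.
  move=> h; rewrite sumEFin; congr (_%:E).
  rewrite (telescope_sumr_eq (fun n => - Fc c n)) //; first by ring.
  move=> k /andP[k3 _]; rewrite u_tel; first by ring.
  by apply: leq_trans k3.
have cF : (Fc c 3 - Fc c N)%:E @[N --> \oo] --> (Fc c 3)%:E.
  apply: cvg_EFin; first by near=> N.
  have h := cvgB (cvg_cst (Fc c 3)) (Fc_cvg c).
  by move: h; rewrite subr0; apply.
apply: cvg_lim => //.
apply: (cvg_trans _ cF); apply: near_eq_cvg; near=> N.
rewrite ps //; near: N; exact: nbhs_infty_ge.
Unshelve. all: by end_near.
Qed.

Lemma Fc3 c : Fc c 3 = 25/(16*243*17) + (c - 17/18)^+2/4.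
Proof. by rewrite /Fc !exprS expr0; field. Qed.

End PC.
Arguments lo {R} n. Arguments hi {R} n.


Section PD.
Variable R : realType.
Local Notation mu := (@lebesgue_measure R).

Definition Tn (g : R -> R) (n : nat) : \bar R :=
  ((w n)%:E * \int[mu]_(x in J n) (g x)%:E)%E.

Lemma w_ge0 n : 0 <= w n :> R.
Proof. by rewrite /w exprn_ge0 // divr_ge0. Qed.

Lemma Tn_ge0 g n : (forall x, 0 <= g x) -> (0 <= Tn g n)%E.
Proof.
move=> g0; apply: mule_ge0; first by rewrite lee_fin w_ge0.
by apply: integral_ge0 => x _; rewrite lee_fin.
Qed.

Lemma Ib_dec (g : R -> R) : continuous g -> (forall x, 0 <= g x) ->
  (\int[mu]_x (dens x * (g x)%:E) =
   Tn g 0 + Tn g 1 + Tn g 2 + \sum_(3 <= n <oo) Tn g n)%E.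
Proof.
move=> cg g0; rewrite dens_int // (@nneseries_split _ _ 0 3); last first.
  by move=> k _; exact: Tn_ge0.
by rewrite add0n big_mkord !big_ord_recl big_ord0 /= adde0 /Tn !addeA.
Qed.

Lemma lo_hi n : (0 < n)%N -> lo n < hi n :> R.
Proof.
case: n => // k _; rewrite /lo /hi /= exprS.
have t0 : (0 : R) < 3^+k by rewrite exprn_gt0.
rewrite invrM ?unitfE ?gt_eqF //.
have : 0 < (3^+k)^-1 :> R by rewrite invr_gt0.
lra.
Qed.

Lemma lo_ge n : (3 <= n)%N -> 8/9 <= lo n :> R.
Proof.
move=> n3; rewrite /lo.
have h9 : (3 : R)^+2 <= 3^+n.-1.
  apply: ler_weXn2l; first by lra.
  by rewrite -ltnS prednK // (leq_trans _ n3).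
have t0 : (0 : R) < 3^+n.-1 by rewrite exprn_gt0.
have : (3^+n.-1)^-1 <= ((3 : R)^+2)^-1.
  by rewrite lef_pV2 // posrE // exprn_gt0.
rewrite expr2; move=> h; have : ((3:R) * 3)^-1 = 1/9 by field.
lra.
Qed.

Lemma hi_le n : hi n <= 1 :> R.
Proof.
rewrite /hi; have : 0 < 3^+n :> R by rewrite exprn_gt0.
move=> h; rewrite lerBlDr lerDl divr_ge0 //; exact: ltW.
Qed.

Lemma T_lb (g : R -> R) n (c : R) : continuous g -> (0 < n)%N ->
  (forall x, lo n <= x -> x <= hi n -> (x - c)^+2 <= g x) ->
  ((w n * Q (lo n) (hi n) c)%:E <= Tn g n)%E.
Proof.
move=> cg n0 H; rewrite EFinM /Tn JE.
apply: lee_wpmul2l; first by rewrite lee_fin w_ge0.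
apply: int_lb => //; exact: lo_hi.
Qed.

Lemma T_ub (g : R -> R) n (c : R) : continuous g -> (0 < n)%N -> (forall x, 0 <= g x) ->
  (forall x, lo n <= x -> x <= hi n -> g x <= (x - c)^+2) ->
  (Tn g n <= (w n * Q (lo n) (hi n) c)%:E)%E.
Proof.
move=> cg n0 g0 H; rewrite EFinM /Tn JE.
apply: lee_wpmul2l; first by rewrite lee_fin w_ge0.
apply: int_ub => //; exact: lo_hi.
Qed.

Lemma T_lb2 (g : R -> R) n (u c1 c2 : R) : continuous g -> lo n < u -> u < hi n ->
  (forall x, lo n <= x -> x <= u -> (x - c1)^+2 <= g x) ->
  (forall x, u <= x -> x <= hi n -> (x - c2)^+2 <= g x) ->
  ((w n * (Q (lo n) u c1 + Q u (hi n) c2))%:E <= Tn g n)%E.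
Proof.
move=> cg lu uh H1 H2; rewrite EFinM /Tn JE.
apply: lee_wpmul2l; first by rewrite lee_fin w_ge0.
rewrite (@int_split _ _ _ u) //; try exact: ltW.
rewrite EFinD; apply: leeD; apply: int_lb => //.
Qed.

Lemma T0_eq (g : R -> R) : Tn g 0 = 0%E.
Proof.
rewrite /Tn JE set_itv_ge ?integral_set0 ?mule0 //.
rewrite /lo /hi /= bnd_simp expr0 invr1 -ltNge; lra.
Qed.

Lemma Q_ge0 (l r c : R) : l <= r -> 0 <= Q l r c.
Proof.
move=> lr; rewrite /Q.
have -> : (r-c)^+3 - (l-c)^+3 = (r - l) * ((r-c)^+2 + (r-c)*(l-c) + (l-c)^+2) by ring.
apply: divr_ge0 => //; apply: mulr_ge0; first by lra.
have h1 := sqr_ge0 ((r-c) + (l-c)/2); have h2 := sqr_ge0 (l-c).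
have -> : (r-c)^+2 + (r-c)*(l-c) + (l-c)^+2 = ((r-c) + (l-c)/2)^+2 + 3/4 * (l-c)^+2 by field.
lra.
Qed.

Lemma tail_lb (g : R -> R) (c : R) : continuous g ->
  (forall x, 8/9 <= x -> x <= 1 -> (x - c)^+2 <= g x) ->
  ((Fc c 3)%:E <= \sum_(3 <= n <oo) Tn g n)%E.
Proof.
move=> cg H; rewrite -series_val eseries_cond [X in (_ <= X)%E]eseries_cond.
apply: lee_nneseries.
- move=> n _ /= n3; rewrite lee_fin mulr_ge0 ?w_ge0 // Q_ge0 //.
  by apply: ltW; apply: lo_hi; apply: leq_trans n3.
- move=> n /= n3; apply: T_lb => //; first by apply: leq_trans n3.
  move=> x h1 h2; apply: H.
  + by apply: (le_trans _ h1); exact: lo_ge.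
  + by apply: (le_trans h2); exact: hi_le.
Qed.

Lemma tail_ub (g : R -> R) (c : R) : continuous g -> (forall x, 0 <= g x) ->
  (forall x, 8/9 <= x -> x <= 1 -> g x <= (x - c)^+2) ->
  (\sum_(3 <= n <oo) Tn g n <= (Fc c 3)%:E)%E.
Proof.
move=> cg g0 H; rewrite -series_val eseries_cond [X in (_ <= X)%E]eseries_cond.
apply: lee_nneseries.
- by move=> n _ /= n3; exact: Tn_ge0.
- move=> n /= n3; apply: T_ub => //; first by apply: leq_trans n3.
  move=> x h1 h2; apply: H.
  + by apply: (le_trans _ h1); exact: lo_ge.
  + by apply: (le_trans h2); exact: hi_le.
Qed.

Lemma tail_T3 (g : R -> R) : (forall x, 0 <= g x) ->
  (Tn g 3 <= \sum_(3 <= n <oo) Tn g n)%E.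
Proof.
move=> g0; rewrite (@nneseries_split _ _ 3 1); last by move=> k _; exact: Tn_ge0.
rewrite big_nat1; apply: leeDl; apply: nneseries_ge0 => n _ _; exact: Tn_ge0.
Qed.

End PD.


Section PE.
Variable R : realType.
Local Notation mu := (@lebesgue_measure R).

Definition m3 (b1 b2 b3 : R) (x : R) : R :=
  Num.min ((x - b1)^+2) (Num.min ((x - b2)^+2) ((x - b3)^+2)).

Lemma m3_cont b1 b2 b3 : continuous (m3 b1 b2 b3).
Proof.
apply: min_fun_continuous; first exact: cq.
apply: min_fun_continuous; exact: cq.
Qed.

Lemma m3_ge0 b1 b2 b3 x : 0 <= m3 b1 b2 b3 x.
Proof. by rewrite /m3 !le_min !sqr_ge0. Qed.

Lemma m3_lb b1 b2 b3 x c : (x - c)^+2 <= (x - b1)^+2 -> (x - c)^+2 <= (x - b2)^+2 ->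
  (x - c)^+2 <= (x - b3)^+2 -> (x - c)^+2 <= m3 b1 b2 b3 x.
Proof. by move=> h1 h2 h3; rewrite /m3 !le_min h1 h2 h3. Qed.

Lemma m3_ub1 b1 b2 b3 x : m3 b1 b2 b3 x <= (x - b1)^+2.
Proof. by rewrite /m3 ge_min lexx. Qed.
Lemma m3_ub2 b1 b2 b3 x : m3 b1 b2 b3 x <= (x - b2)^+2.
Proof. by rewrite /m3 !ge_min lexx orbT. Qed.
Lemma m3_ub3 b1 b2 b3 x : m3 b1 b2 b3 x <= (x - b3)^+2.
Proof. by rewrite /m3 !ge_min lexx !orbT. Qed.

Lemma sqle1 (x b c : R) : b <= c -> b + c <= 2 * x -> (x - c)^+2 <= (x - b)^+2.
Proof.
move=> h1 h2; rewrite -subr_ge0.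
have -> : (x - b)^+2 - (x - c)^+2 = (c - b) * (2 * x - b - c) by ring.
by apply: mulr_ge0; lra.
Qed.

Lemma sqle2 (x b c : R) : c <= b -> 2 * x <= b + c -> (x - c)^+2 <= (x - b)^+2.
Proof.
move=> h1 h2; rewrite -subr_ge0.
have -> : (x - b)^+2 - (x - c)^+2 = (b - c) * (b + c - 2 * x) by ring.
by apply: mulr_ge0; lra.
Qed.

Lemma lo1 : lo 1 = 0 :> R. Proof. by rewrite /lo /= expr0 invr1 subrr. Qed.
Lemma hi1 : hi 1 = 1/3 :> R. Proof. by rewrite /hi expr1; field. Qed.
Lemma lo2 : lo 2 = 2/3 :> R. Proof. by rewrite /lo /= expr1; field. Qed.
Lemma hi2 : hi 2 = 7/9 :> R. Proof. by rewrite /hi expr2; field. Qed.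
Lemma lo3 : lo 3 = 8/9 :> R. Proof. by rewrite /lo /= expr2; field. Qed.
Lemma hi3 : hi 3 = 25/27 :> R. Proof. by rewrite /hi !exprS expr0; field. Qed.
Lemma w1 : w 1 = 3/2 :> R. Proof. by rewrite /w expr1. Qed.
Lemma w2 : w 2 = 9/4 :> R. Proof. by rewrite /w expr2; field. Qed.
Lemma w3 : w 3 = 27/8 :> R. Proof. by rewrite /w !exprS expr0; field. Qed.

Lemma B1 (g : R -> R) c : continuous g ->
  (forall x, 0 <= x -> x <= 1/3 -> (x - c)^+2 <= g x) ->
  ((1/216 + (c - 1/6)^+2/2)%:E <= Tn g 1)%E.
Proof.
move=> cg H; have := @T_lb _ g 1 c cg isT; rewrite lo1 hi1 w1 /Q.
have -> : 3 / 2 * (((1/3 - c)^+3 - (0 - c)^+3) / 3) = 1/216 + (c - 1/6)^+2/2 by field.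
by apply.
Qed.

Lemma B2 (g : R -> R) c : continuous g ->
  (forall x, 2/3 <= x -> x <= 7/9 -> (x - c)^+2 <= g x) ->
  ((1/(16*243) + (c - 13/18)^+2/4)%:E <= Tn g 2)%E.
Proof.
move=> cg H; have := @T_lb _ g 2 c cg isT; rewrite lo2 hi2 w2 /Q.
have -> : 9 / 4 * (((7/9 - c)^+3 - (2/3 - c)^+3) / 3) = 1/(16*243) + (c - 13/18)^+2/4 by field.
by apply.
Qed.

Lemma B3one (g : R -> R) : continuous g ->
  (forall x, 8/9 <= x -> x <= 25/27 -> (x - 1)^+2 <= g x) ->
  ((19/(8*2187))%:E <= Tn g 3)%E.
Proof.
move=> cg H; have := @T_lb _ g 3 1 cg isT; rewrite lo3 hi3 w3 /Q.
have -> : 27 / 8 * (((25/27 - 1)^+3 - (8/9 - 1)^+3) / 3) = 19/(8*2187) :> R by field.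
by apply.
Qed.

Lemma B1split (g : R -> R) u c : continuous g -> 0 < u -> u < 1/3 ->
  (forall x, 0 <= x -> x <= u -> (x - c)^+2 <= g x) ->
  (forall x, u <= x -> x <= 1/3 -> (x - 1/2)^+2 <= g x) ->
  ((3/2 * (Q 0 u c + Q u (1/3) (1/2)))%:E <= Tn g 1)%E.
Proof.
move=> cg h1 h2 H1 H2; have := @T_lb2 _ g 1 u c (1/2) cg.
rewrite lo1 hi1 w1; apply => //.
Qed.

Lemma B2split (g : R -> R) u c : continuous g -> 2/3 < u -> u < 7/9 ->
  (forall x, 2/3 <= x -> x <= u -> (x - 1/2)^+2 <= g x) ->
  (forall x, u <= x -> x <= 7/9 -> (x - c)^+2 <= g x) ->
  ((9/4 * (Q (2/3) u (1/2) + Q u (7/9) c))%:E <= Tn g 2)%E.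
Proof.
move=> cg h1 h2 H1 H2; have := @T_lb2 _ g 2 u (1/2) c cg.
rewrite lo2 hi2 w2; apply => //.
Qed.

End PE.


Ltac sq := first [ exact: lexx | (apply: sqle1; lra) | (apply: sqle2; lra) ].

Section PF.
Variable R : realType.
Local Notation mu := (@lebesgue_measure R).

Definition Kv : R := 25/(16*243*17).
Definition Dv : R := 1/(16*243) + Kv.
Definition V3v : R := 1/216 + Dv.

Lemma Fc3' (c : R) : Fc c 3 = Kv + (c - 17/18)^+2/4.
Proof. by rewrite Fc3. Qed.

Lemma sq0 (a b : R) : (a - b)^+2 <= 0 -> a = b.
Proof.
move=> h; have : (a - b)^+2 = 0 by apply/eqP; rewrite eq_le h sqr_ge0.
by move/eqP; rewrite sqrf_eq0 subr_eq0 => /eqP.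
Qed.

Lemma k1_L (b1 b2 b3 : R) : b1 <= 1/2 -> 1/2 < b2 -> b2 <= b3 ->
  exists A, (A%:E <= Tn (m3 b1 b2 b3) 1)%E /\ 1/216 <= A /\ (A <= 1/216 -> b1 = 1/6).
Proof.
move=> h1 h2 h3.
have cg : continuous (m3 b1 b2 b3) by exact: m3_cont.
case: (leP (1/6) b1) => hb.
  exists (1/216 + (b1 - 1/6)^+2/2); split.
    by apply: B1 => // x hx1 hx2; apply: m3_lb; sq.
  split; first by have := sqr_ge0 (b1 - 1/6); lra.
  by move=> h; apply: sq0; have := sqr_ge0 (b1 - 1/6); lra.
case: (leP b1 (-1/2)) => hc.
  exists (1/216 + (1/2 - 1/6)^+2/2); split.
    by apply: B1 => // x hx1 hx2; apply: m3_lb; sq.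
  have e : (1/2 - 1/6 : R)^+2/2 = 1/18 by field.
  by rewrite e; split => *; lra.
pose u := (b1 + 1/2)/2.
have hu1 : 0 < u by rewrite /u; lra.
have hu2 : u < 1/3 by rewrite /u; lra.
exists (3/2 * (Q 0 u b1 + Q u (1/3) (1/2))); split.
  apply: B1split => //.
  - by move=> x hx1 hx2; apply: m3_lb; rewrite /u in hx2; sq.
  - by move=> x hx1 hx2; apply: m3_lb; rewrite /u in hx1; sq.
have -> : 3/2 * (Q 0 u b1 + Q u (1/3) (1/2)) = 1/216 + 3/8 * ((1/6 - b1)^+2 * (1 - (1/6 - b1))).
  by rewrite /Q /u; field.
have hp : 0 < (1/6 - b1)^+2 * (1 - (1/6 - b1)).
  by apply: mulr_gt0; [rewrite exprn_gt0 //; lra | lra].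
split; first by lra.
by move=> h; exfalso; lra.
Qed.


Lemma tail_ge0 (g : R -> R) : (forall x, 0 <= g x) -> (0%:E <= \sum_(3 <= n <oo) Tn g n)%E.
Proof. by move=> g0; apply: nneseries_ge0 => n _ _; exact: Tn_ge0. Qed.

Lemma k1_R (b1 b2 b3 : R) : b1 <= 1/2 -> 1/2 < b2 -> b2 <= b3 ->
  exists B C, (B%:E <= Tn (m3 b1 b2 b3) 2)%E /\
    (C%:E <= \sum_(3 <= n <oo) Tn (m3 b1 b2 b3) n)%E /\
    Dv <= B + C /\ (B + C <= Dv -> b2 = 13/18 /\ b3 = 17/18).
Proof.
move=> h1 h2 h3.
have cg : continuous (m3 b1 b2 b3) by exact: m3_cont.
have g0 : forall x, 0 <= m3 b1 b2 b3 x by move=> x; exact: m3_ge0.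
have hK : 0 < Kv by rewrite /Kv; lra.
case: (leP (5/6) b2) => ha.
  exists (1/(16*243) + (5/6 - 13/18)^+2/4), 0; split.
    by apply: B2 => // x hx1 hx2; apply: m3_lb; sq.
  split; first exact: tail_ge0.
  have e : (5/6 - 13/18 : R)^+2/4 = 1/324 by field.
  by rewrite e /Dv /Kv; split => *; lra.
case: (leP (b2 + b3) (16/9)) => hb.
  case: (leP (14/9) (b2 + b3)) => hc.
    exists (1/(16*243) + (b2 - 13/18)^+2/4), (Fc b3 3); split.
      by apply: B2 => // x hx1 hx2; apply: m3_lb; sq.
    split.
      by apply: tail_lb => // x hx1 hx2; apply: m3_lb; sq.
    rewrite Fc3' /Dv; have q1 := sqr_ge0 (b2 - 13/18); have q2 := sqr_ge0 (b3 - 17/18).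
    split; first by lra.
    by move=> h; split; apply: sq0; lra.
  case: (leP (1/900) ((b3 - 17/18)^+2)) => hd.
    exists 0, (Fc b3 3); split; first by apply: Tn_ge0.
    split; first by apply: tail_lb => // x hx1 hx2; apply: m3_lb; sq.
    by rewrite Fc3' /Dv /Kv; split => *; lra.
  have hb3 : 41/45 < b3.
    case: (ltP (41/45) b3) => // hh; exfalso.
    have : (1/30)^+2 <= (b3 - 17/18)^+2.
      have -> : (b3 - 17/18)^+2 = (17/18 - b3)^+2 by ring.
      by rewrite ler_pXn2r ?nnegrE //; lra.
    have -> : (1/30 : R)^+2 = 1/900 by field.
    lra.
  have hb2 : b2 < 29/45 by lra.
  exists (1/(16*243) + (29/45 - 13/18)^+2/4), (Fc b3 3); split.
    by apply: B2 => // x hx1 hx2; apply: m3_lb; sq.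
  split; first by apply: tail_lb => // x hx1 hx2; apply: m3_lb; sq.
  have e : (29/45 - 13/18 : R)^+2/4 = 49/(16*25*81) by field.
  rewrite e Fc3' /Dv; have q2 := sqr_ge0 (b3 - 17/18); rewrite /Kv.
  by split => *; lra.
case: (leP (23/30) b2) => he.
  exists (1/(16*243) + (b2 - 13/18)^+2/4), 0; split.
    by apply: B2 => // x hx1 hx2; apply: m3_lb; sq.
  split; first exact: tail_ge0.
  have : (2/45)^+2 <= (b2 - 13/18)^+2 by rewrite ler_pXn2r ?nnegrE //; lra.
  have -> : (2/45 : R)^+2 = 4/(45*45) by field.
  by rewrite /Dv /Kv; split => *; lra.
exists 0, (19/(8*2187)); split; first by apply: Tn_ge0.
split.
  apply: (le_trans _ (tail_T3 g0)).
  by apply: B3one => // x hx1 hx2; apply: m3_lb; sq.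
by rewrite /Dv /Kv; split => *; lra.
Qed.


Lemma k2 (b1 b2 b3 : R) : b1 <= b2 -> b2 <= 1/2 -> 1/2 < b3 ->
  exists B C, (B%:E <= Tn (m3 b1 b2 b3) 2)%E /\
    (C%:E <= \sum_(3 <= n <oo) Tn (m3 b1 b2 b3) n)%E /\ V3v < B + C.
Proof.
move=> h1 h2 h3.
have cg : continuous (m3 b1 b2 b3) by exact: m3_cont.
have g0 : forall x, 0 <= m3 b1 b2 b3 x by move=> x; exact: m3_ge0.
case: (leP (19/18) b3) => ha.
  exists (1/(16*243) + (1/2 - 13/18)^+2/4), 0; split.
    by apply: B2 => // x hx1 hx2; apply: m3_lb; sq.
  split; first exact: tail_ge0.
  have e : (1/2 - 13/18 : R)^+2/4 = 1/81 by field.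
  by rewrite e /V3v /Dv /Kv; lra.
case: (leP b3 (5/6)) => hb.
  exists (1/(16*243) + (b3 - 13/18)^+2/4), (Fc b3 3); split.
    by apply: B2 => // x hx1 hx2; apply: m3_lb; sq.
  split; first by apply: tail_lb => // x hx1 hx2; apply: m3_lb; sq.
  rewrite Fc3' /V3v /Dv; have q := sqr_ge0 (2 * b3 - 30/18).
  have -> : (b3 - 13/18) ^+ 2 / 4 = ((2 * b3 - 30/18)^+2 + (4/18)^+2)/8 - (b3 - 17/18)^+2/4.
    by field.
  have -> : (4/18 : R)^+2 = 4/81 by field.
  lra.
pose u := (1/2 + b3)/2.
have hu1 : 2/3 < u by rewrite /u; lra.
have hu2 : u < 7/9 by rewrite /u; lra.
exists (9/4 * (Q (2/3) u (1/2) + Q u (7/9) b3)), (Fc b3 3); split.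
  apply: B2split => //.
  - by move=> x hx1 hx2; apply: m3_lb; rewrite /u in hx2; sq.
  - by move=> x hx1 hx2; apply: m3_lb; rewrite /u in hx1; sq.
split; first by apply: tail_lb => // x hx1 hx2; apply: m3_lb; sq.
pose t := b3 - 5/6.
have -> : 9/4 * (Q (2/3) u (1/2) + Q u (7/9) b3) + Fc b3 3 =
   V3v + 1/648 + t^+2 * (5/16 - 9/16 * t).
  by rewrite Fc3' /t /u /Q /V3v /Dv /Kv; field.
have : 0 <= t^+2 * (5/16 - 9/16 * t) by apply: mulr_ge0; [exact: sqr_ge0 | rewrite /t; lra].
lra.
Qed.

Lemma k0 (b1 b2 b3 : R) : 1/2 < b1 -> b1 <= b2 -> b2 <= b3 ->
  exists A, (A%:E <= Tn (m3 b1 b2 b3) 1)%E /\ V3v < A.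
Proof.
move=> h1 h2 h3.
have cg : continuous (m3 b1 b2 b3) by exact: m3_cont.
exists (1/216 + (1/2 - 1/6)^+2/2); split.
  by apply: B1 => // x hx1 hx2; apply: m3_lb; sq.
have e : (1/2 - 1/6 : R)^+2/2 = 1/18 by field.
by rewrite e /V3v /Dv /Kv; lra.
Qed.

Lemma k3 (b1 b2 b3 : R) : b1 <= b2 -> b2 <= b3 -> b3 <= 1/2 ->
  exists B, (B%:E <= Tn (m3 b1 b2 b3) 2)%E /\ V3v < B.
Proof.
move=> h1 h2 h3.
have cg : continuous (m3 b1 b2 b3) by exact: m3_cont.
exists (1/(16*243) + (1/2 - 13/18)^+2/4); split.
  by apply: B2 => // x hx1 hx2; apply: m3_lb; sq.
have e : (1/2 - 13/18 : R)^+2/4 = 1/81 by field.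
by rewrite e /V3v /Dv /Kv; lra.
Qed.

End PF.
Arguments Kv {R}. Arguments Dv {R}. Arguments V3v {R}.


Section PG.
Variable R : realType.
Local Notation mu := (@lebesgue_measure R).

Definition Ib (b1 b2 b3 : R) : \bar R := (\int[mu]_x (dens x * (m3 b1 b2 b3 x)%:E))%E.

Lemma sum3 (A B C : R) (T1 T2 T3 : \bar R) : (A%:E <= T1)%E -> (B%:E <= T2)%E ->
  (C%:E <= T3)%E -> ((A + B + C)%:E <= T1 + T2 + T3)%E.
Proof. by move=> h1 h2 h3; rewrite !EFinD; apply: leeD => //; apply: leeD. Qed.

Lemma Ib_E (b1 b2 b3 : R) : Ib b1 b2 b3 =
  (Tn (m3 b1 b2 b3) 1 + Tn (m3 b1 b2 b3) 2 + \sum_(3 <= n <oo) Tn (m3 b1 b2 b3) n)%E.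
Proof.
rewrite /Ib Ib_dec; last 2 first.
- exact: m3_cont.
- by move=> x; exact: m3_ge0.
by rewrite T0_eq add0e.
Qed.

Lemma core (b1 b2 b3 : R) : b1 <= b2 -> b2 <= b3 ->
  (V3v%:E <= Ib b1 b2 b3)%E /\
  ((Ib b1 b2 b3 <= V3v%:E)%E -> [/\ b1 = 1/6, b2 = 13/18 & b3 = 17/18]).
Proof.
move=> h1 h2.
have g0 : forall x, 0 <= m3 b1 b2 b3 x by move=> x; exact: m3_ge0.
have T0 n : (0%:E <= Tn (m3 b1 b2 b3) n)%E by exact: Tn_ge0.
suff [A [B [C [hA [hB [hC [hV heq]]]]]]] : exists A B C,
    (A%:E <= Tn (m3 b1 b2 b3) 1)%E /\ (B%:E <= Tn (m3 b1 b2 b3) 2)%E /\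
    (C%:E <= \sum_(3 <= n <oo) Tn (m3 b1 b2 b3) n)%E /\ V3v <= A + B + C /\
    (A + B + C <= V3v -> [/\ b1 = 1/6, b2 = 13/18 & b3 = 17/18]).
  have H := sum3 hA hB hC; rewrite -Ib_E in H.
  split; first by apply: le_trans H; rewrite lee_fin.
  by move=> hI; apply: heq; rewrite -lee_fin; exact: le_trans H hI.
case: (ltP (1/2) b1) => c0.
  have [A [hA hV]] := k0 c0 h1 h2.
  exists A, 0, 0; split => //; split => //; split; first exact: tail_ge0.
  by split => [|h]; [lra | exfalso; lra].
case: (leP b3 (1/2)) => c3.
  have [B [hB hV]] := k3 h1 h2 c3.
  exists 0, B, 0; split => //; split => //; split; first exact: tail_ge0.
  by split => [|h]; [lra | exfalso; lra].
case: (leP b2 (1/2)) => c2.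
  have [B [C [hB [hC hV]]]] := k2 h1 c2 c3.
  exists 0, B, C; split => //; split => //; split => //.
  by split => [|h]; [lra | exfalso; lra].
have [A [hA [hA1 hA2]]] := k1_L c0 c2 h2.
have [B [C [hB [hC [hBC1 hBC2]]]]] := k1_R c0 c2 h2.
exists A, B, C; split => //; split => //; split => //.
split; first by rewrite /V3v; lra.
move=> h; have [e2 e3] : b2 = 13/18 /\ b3 = 17/18 by apply: hBC2; rewrite /V3v in h; lra.
split => //; apply: hA2; rewrite /V3v in h; lra.
Qed.

Lemma Ib_opt : (Ib (1/6) (13/18) (17/18) <= V3v%:E)%E.
Proof.
have cg : continuous (m3 (1/6 : R) (13/18) (17/18)) by exact: m3_cont.
have g0 : forall x, 0 <= m3 (1/6 : R) (13/18) (17/18) x by move=> x; exact: m3_ge0.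
rewrite Ib_E.
have U1 := @T_ub _ (m3 (1/6 : R) (13/18) (17/18)) 1 (1/6) cg isT g0.
rewrite lo1 hi1 w1 in U1.
have U2 := @T_ub _ (m3 (1/6 : R) (13/18) (17/18)) 2 (13/18) cg isT g0.
rewrite lo2 hi2 w2 in U2.
have U3 := @tail_ub _ (m3 (1/6 : R) (13/18) (17/18)) (17/18) cg g0.
have e1 : 3 / 2 * Q 0 (1 / 3) (1 / 6) = 1/216 :> R by rewrite /Q; field.
have e2 : 9 / 4 * Q (2/3) (7/9) (13/18) = 1/(16*243) :> R by rewrite /Q; field.
have -> : V3v = (3 / 2 : R) * Q 0 (1 / 3) (1 / 6) + 9 / 4 * Q (2/3) (7/9) (13/18) + Fc (17/18) 3.
  by rewrite /Q Fc3' /V3v /Dv /Kv; field.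
rewrite !EFinD; apply: leeD; first apply: leeD.
- by apply: U1 => x _ _; exact: m3_ub1.
- by apply: U2 => x _ _; exact: m3_ub2.
- by apply: U3 => x _ _; exact: m3_ub3.
Qed.

End PG.

Local Open Scope fset_scope.

Section PH.
Variable R : realType.
Local Notation mu := (@lebesgue_measure R).

Lemma le_int_nonmeas (f1 f2 : R -> \bar R) : (forall x, (0 <= f1 x)%E) ->
  (forall x, (f1 x <= f2 x)%E) ->
  (\int[mu]_x f1 x <= \int[mu]_x f2 x)%E.
Proof.
move=> f0 f12.
have f20 x : (0 <= f2 x)%E by apply: le_trans (f12 x).
rewrite !ge0_integralTE //.
apply: le_ereal_sup => _ [h hf1 <-].
exists h => // x.
exact: le_trans (hf1 x) (f12 x).
Qed.

Lemma bigmin_le_mem (s : seq R) (F : R -> \bar R) a : a \in s ->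
  (\big[Order.min/+oo%E]_(i <- s) F i <= F a)%E.
Proof.
elim: s => // b s IH; rewrite in_cons big_cons => /orP[/eqP ->|h].
  by rewrite ge_min lexx.
by rewrite ge_min (IH h) orbT.
Qed.

Lemma mindist_ge (beta : {fset R}) b1 b2 b3 :
  (forall a, a \in beta -> [\/ a = b1, a = b2 | a = b3]) ->
  forall x, ((m3 b1 b2 b3 x)%:E <= mindist beta x)%E.
Proof.
move=> H x; rewrite /mindist big_seq; apply: le_bigmin; first exact: leey.
move=> a ha; rewrite lee_fin; case: (H a ha) => ->.
- exact: m3_ub1.
- exact: m3_ub2.
- exact: m3_ub3.
Qed.

Lemma m3_att (b1 b2 b3 x : R) :
  [\/ (x - b1)^+2 <= m3 b1 b2 b3 x, (x - b2)^+2 <= m3 b1 b2 b3 x |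
      (x - b3)^+2 <= m3 b1 b2 b3 x].
Proof.
rewrite /m3 !le_min.
case: (leP ((x - b2)^+2) ((x - b3)^+2)) => h;
case: (leP ((x - b1)^+2) ((x - b2)^+2)) => h';
case: (leP ((x - b1)^+2) ((x - b3)^+2)) => h''.
all: first [ (constructor 1; apply/and3P; split; first [exact: lexx | done | lra])
           | (constructor 2; apply/and3P; split; first [exact: lexx | done | lra])
           | (constructor 3; apply/and3P; split; first [exact: lexx | done | lra]) ].
Qed.

Lemma mindist3 (y1 y2 y3 : R) x : mindist [fset y1; y2; y3] x = (m3 y1 y2 y3 x)%:E.
Proof.
apply/eqP; rewrite eq_le; apply/andP; split; last first.
  apply: mindist_ge => a; rewrite !inE => /orP[/orP[]|] /eqP ->.
  - by constructor 1.
  - by constructor 2.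
  - by constructor 3.
have hm : forall a, a \in [fset y1; y2; y3] -> (x - a)^+2 <= m3 y1 y2 y3 x ->
    (mindist [fset y1; y2; y3] x <= (m3 y1 y2 y3 x)%:E)%E.
  move=> a ha h; apply: le_trans (bigmin_le_mem (fun a => ((x - a)^+2)%:E) ha) _.
  by rewrite lee_fin.
case: (m3_att y1 y2 y3 x) => h; apply: (hm _ _ h); by rewrite !inE eqxx ?orbT.
Qed.

Lemma card3 (y1 y2 y3 : R) : (#|` [fset y1; y2; y3]| <= 3)%N.
Proof.
rewrite !cardfsU !cardfs1; lia.
Qed.

End PH.

Local Open Scope fset_scope.

Section PI.
Variable R : realType.
Local Notation mu := (@lebesgue_measure R).

Lemma sort3 (x y z : R) : exists b1 b2 b3, b1 <= b2 /\ b2 <= b3 /\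
  (forall a, [\/ a = x, a = y | a = z] -> [\/ a = b1, a = b2 | a = b3]).
Proof.
case: (leP x y) => hxy; case: (leP y z) => hyz; case: (leP x z) => hxz.
all: first [ (exists x, y, z; split; [lra | split; [lra | idtac]])
           | (exists x, z, y; split; [lra | split; [lra | idtac]])
           | (exists y, x, z; split; [lra | split; [lra | idtac]])
           | (exists y, z, x; split; [lra | split; [lra | idtac]])
           | (exists z, x, y; split; [lra | split; [lra | idtac]])
           | (exists z, y, x; split; [lra | split; [lra | idtac]]) ].
all: move=> a [] ->; by [constructor 1 | constructor 2 | constructor 3].
Qed.

Lemma cover (beta : {fset R}) : (#|` beta| <= 3)%N -> exists b1 b2 b3,
  b1 <= b2 /\ b2 <= b3 /\ forall a, a \in beta -> [\/ a = b1, a = b2 | a = b3].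
Proof.
move=> hc.
suff [x [y [z H]]] : exists x y z, forall a, a \in beta -> [\/ a = x, a = y | a = z].
  have [b1 [b2 [b3 [s1 [s2 Hs]]]]] := sort3 x y z.
  by exists b1, b2, b3; split => //; split => // a ha; apply: Hs; apply: H.
have hin a : (a \in beta) = (a \in enum_fset beta) by [].
move: hc; rewrite [#|` beta|]/=.
case E: (enum_fset beta) => [|x [|y [|z [|w t]]]] //= _.
- by exists 0, 0, 0 => a; rewrite hin E.
- by exists x, x, x => a; rewrite hin E inE => /eqP ->; constructor 1.
- exists x, y, y => a; rewrite hin E !inE => /orP[] /eqP ->.
  + by constructor 1.
  + by constructor 2.
- exists x, y, z => a; rewrite hin E !inE => /orP[/eqP ->|/orP[] /eqP ->].
  + by constructor 1.
  + by constructor 2.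
  + by constructor 3.
Qed.

Lemma dens_ge0 (x : R) : (0 <= dens x)%E.
Proof.
rewrite /dens; apply: nneseries_ge0 => n _ _.
by rewrite lee_fin mulr_ge0 // ?exprn_ge0 ?divr_ge0.
Qed.

Lemma cost3 (y1 y2 y3 : R) : cost [fset y1; y2; y3] = Ib y1 y2 y3.
Proof. by rewrite /cost /Ib; apply: eq_integral => x _; rewrite mindist3. Qed.

Lemma V3_eq : V R 3 = V3v%:E.
Proof.
apply/le_anti/andP; split.
  apply: ge_ereal_inf; exists (cost [fset (1/6 : R); 13/18; 17/18]).
    by exists [fset (1/6 : R); 13/18; 17/18] => //; exact: card3.
  by rewrite cost3; exact: Ib_opt.
apply: le_ereal_inf_tmp => _ [beta hb <-].
have [b1 [b2 [b3 [s1 [s2 hc]]]]] := cover hb.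
apply: le_trans (proj1 (core s1 s2)) _.
rewrite /Ib /cost; apply: le_int_nonmeas.
- by move=> x; apply: mule_ge0; [exact: dens_ge0 | rewrite lee_fin; exact: m3_ge0].
- move=> x; apply: lee_wpmul2l; first exact: dens_ge0.
  exact: mindist_ge hc x.
Qed.

End PI.

Theorem lemma4p2_aux (R : realType) (a1 a2 a3 : R) :
  a1 < a2 -> a2 < a3 ->
  optimal_set 3 [fset a1; a2; a3] ->
  [/\ a1 = 1 / 6, a2 = 13 / 18, a3 = 17 / 18 & V R 3 = (29 / 5508)%:E].
Proof.
move=> h12 h23 [_ hopt].
have hI : (Ib a1 a2 a3 <= V3v%:E)%E by rewrite -cost3 hopt V3_eq.
have [e1 e2 e3] := (proj2 (core (ltW h12) (ltW h23))) hI.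
split => //; rewrite V3_eq; congr (_%:E); rewrite /V3v /Dv /Kv; by field.
Qed.

End Aux.

Theorem lemma4p2 (R : realType) (a1 a2 a3 : R) :
  a1 < a2 -> a2 < a3 ->
  optimal_set 3 [fset a1; a2; a3] ->
  [/\ a1 = 1 / 6, a2 = 13 / 18, a3 = 17 / 18 & V R 3 = (29 / 5508)%:E].
Proof. exact: Aux.lemma4p2_aux. Qed.
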